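(* Let $\mathcal T$ be a triangulated category, linear over some field, with well-defined numerical Grothendieck group $\mathcal N(\mathcal T)$ of finite rank, and let $\sigma=(Z,\mathcal A)$ be a numerical stability condition on $\mathcal T$. Assume that $Z$ admits factorizations $Z=g_i\circ v_i$, $i=1,\dots,n$, through quotient lattices $v_i\colon\mathcal N(\mathcal T)\twoheadrightarrow\Lambda_i$, $g_i\colon\Lambda_i\to\mathbb C$, such that $\bigcap_i\ker(v_i)=\{0\}$, and that there are quadratic forms $Q_i$ on $\Lambda_i\otimes\mathbb R$ satisfying the support property (i.e. $Q_i(v_i(\mathcal E))\ge0$ for every $\sigma$-semistable $\mathcal E$ and $Q_i$ is negative definite on $\ker(g_i)$). Then for any $\lambda_1,\dots,\lambda_n>0$, $Z$ satisfies the support property on $\mathcal N(\mathcal T)$ with respect to $Q\coloneqq\lambda_1Q_1(v_1)+\dots+\lambda_nQ_n(v_n)$.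
   Context: The support property for $Z$ on $\mathcal N(\mathcal T)$ with respect to a quadratic form $Q$ on $\mathcal N(\mathcal T)\otimes\mathbb R$ means: $Q([\mathcal E])\ge0$ for every $\sigma$-semistable object $\mathcal E$, and $Q$ is negative definite on $\ker(Z)\subset\mathcal N(\mathcal T)\otimes\mathbb R$. *)

(* Defs.v *)
From HB Require Import structures.
From mathcomp Require Import all_boot all_order all_algebra.
From mathcomp Require Import reals.
Set Implicit Arguments. Unset Strict Implicit. Unset Printing Implicit Defensive.
Import Order.TTheory GRing.Theory Num.Theory.
Local Open Scope ring_scope.

Definition intmxR {R : realType} (m n : nat) (M : 'M[int]_(m, n)) : 'M[R]_(m, n) :=
  map_mx (fun z : int => z%:~R) M.

Definition qform (R : realType) (m : nat) (A : 'M[R]_m) (x : 'rV[R]_m) : R :=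
  (x *m A *m x^T) 0 0.

(* Main.v *)
Require Import Defs.
From HB Require Import structures.
From mathcomp Require Import all_boot all_order all_algebra.
From mathcomp Require Import reals.
Import Order.TTheory GRing.Theory Num.Theory.
Local Open Scope ring_scope.
From mathcomp Require Import ring.
Set Implicit Arguments. Unset Strict Implicit.


Definition intmxQ {m n : nat} (M : 'M[int]_(m, n)) : 'M[rat]_(m, n) :=
  map_mx (fun z : int => z%:~R) M.

Lemma intmxQ_eq0 m n (M : 'M[int]_(m, n)) : intmxQ M = 0 -> M = 0.
Proof.
move=> H; apply/matrixP=> a b; move/matrixP/(_ a b): H; rewrite !mxE.
by move/eqP; rewrite intr_eq0 => /eqP.
Qed.

Lemma clear_den r (I : finType) (m : I -> nat) (V : forall i : I, 'M[int]_(r, m i))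
  (hker : forall x : 'rV[int]_r, (forall i, x *m V i = 0) -> x = 0)
  (u : 'rV[rat]_r) : (forall i, u *m intmxQ (V i) = 0) -> u = 0.
Proof.
move=> hu.
pose d : int := \prod_(j < r) denq (u 0 j).
pose w : 'rV[int]_r := \row_j (numq (u 0 j) * \prod_(l < r | l != j) denq (u 0 l)).
have hw : intmxQ w = (d%:~R : rat) *: u.
  apply/matrixP=> a j; rewrite !mxE (ord1 a) intrM numqE /d.
  rewrite [in RHS](bigD1 j) //= intrM; ring.
have hd : d != 0.
  by rewrite /d; apply/lt0r_neq0/prodr_gt0 => j _; apply: denq_gt0.
have w0 : w = 0.
  apply: hker => i; apply: intmxQ_eq0.
  by rewrite /intmxQ map_mxM -/(intmxQ w) hw -scalemxAl hu scaler0.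
move: hw; rewrite w0 /intmxQ map_mx0 => /esym/eqP; rewrite scaler_eq0.
by rewrite intr_eq0 (negPf hd) /= => /eqP.
Qed.

Lemma real_ker (R : realType) r (I : finType) (m : I -> nat)
  (V : forall i : I, 'M[int]_(r, m i))
  (hker : forall x : 'rV[int]_r, (forall i, x *m V i = 0) -> x = 0)
  (x : 'rV[R]_r) : (forall i, x *m intmxR (V i) = 0) -> x = 0.
Proof.
move=> hx.
pose K := (\bigcap_(i : I) kermx (intmxQ (V i)))%MS.
have K0 : K == 0.
  rewrite -nz_row_eq0; apply/eqP; apply: (clear_den hker) => i.
  apply/sub_kermxP; apply: submx_trans (nz_row_sub K) _.
  exact: (bigcapmx_inf i).
have eR : forall i, intmxR (R:=R) (V i) = map_mx ratr (intmxQ (V i)).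
  by move=> i; apply/matrixP=> a b; rewrite !mxE ratr_int.
have sub : (x <= map_mx ratr K)%MS.
  have : (x <= \bigcap_(i : I) map_mx ratr (kermx (intmxQ (V i))))%MS.
    apply/sub_bigcapmxP => i _; rewrite map_kermx -eR; exact/sub_kermxP.
  move/submx_trans; apply.
  rewrite /K; elim/big_rec2: _ => [|i B C _ IH].
    by rewrite map_mx1 submx_refl.
  by rewrite map_capmx; apply: capmxS.
by move: sub; rewrite (eqP K0) map_mx0 submx0 => /eqP.
Qed.

Unset Implicit Arguments.
Theorem lemma7p5
  (R : realType) (r n : nat)
  (semistable : 'rV[int]_r -> Prop)
  (Z : 'M[R]_(r, 2))
  (m : 'I_n -> nat)
  (V : forall i : 'I_n, 'M[int]_(r, m i))
  (G : forall i : 'I_n, 'M[R]_(m i, 2))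
  (A : forall i : 'I_n, 'M[R]_(m i))
  (lambda : 'I_n -> R)
  (hV_surj : forall i (y : 'rV[int]_(m i)), exists x : 'rV[int]_r, x *m V i = y)
  (hfact : forall i, Z = intmxR (V i) *m G i)
  (hker : forall x : 'rV[int]_r, (forall i, x *m V i = 0) -> x = 0)
  (hQ_ss : forall i (e : 'rV[int]_r), semistable e ->
             0 <= qform (A i) (intmxR (e *m V i)))
  (hQ_neg : forall i (y : 'rV[R]_(m i)), y *m G i = 0 -> y != 0 ->
             qform (A i) y < 0)
  (hlambda : forall i, 0 < lambda i) :
  let Q := fun x : 'rV[R]_r =>
             \sum_(i < n) lambda i * qform (A i) (x *m intmxR (V i)) in
  (forall e : 'rV[int]_r, semistable e -> 0 <= Q (intmxR e)) /\
  (forall x : 'rV[R]_r, x *m Z = 0 -> x != 0 -> Q x < 0).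
Proof.
move=> Q; split.
  move=> e he; rewrite /Q; apply: sumr_ge0 => i _.
  apply: mulr_ge0; first exact: ltW.
  by rewrite /intmxR -map_mxM; apply: hQ_ss.
move=> x hxZ hx0.
have [i0 hi0] : exists i, x *m intmxR (V i) != 0.
  apply/existsP; rewrite -negb_forall; apply/negP => /forallP H.
  move/negP: hx0; apply; apply/eqP; apply: (real_ker hker) => i.
  exact/eqP/H.
have hG : forall i, (x *m intmxR (V i)) *m G i = 0.
  by move=> i; rewrite -mulmxA -hfact.
rewrite /Q (bigD1 i0) //=.
have h1 : lambda i0 * qform (A i0) (x *m intmxR (V i0)) < 0.
  by rewrite pmulr_rlt0 //; apply: hQ_neg.
have h2 : \sum_(i < n | i != i0) lambda i * qform (A i) (x *m intmxR (V i)) <= 0.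
  apply: sumr_le0 => i _.
  have [->|hy] := eqVneq (x *m intmxR (V i)) 0.
    by rewrite /qform !mul0mx mxE mulr0.
  exact: (mulr_ge0_le0 (ltW (hlambda i)) (ltW (hQ_neg _ _ (hG i) hy))).
by have := ltr_leD h1 h2; rewrite addr0.
Qed.
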